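(* Let $G$ be a graph, $b\ge0$, $\beta:E(G)\to\{0,1,2,3\}$, $C$ a vertex cover of $G$, and let $\delta$ be a $b$-bend $\beta$-restricted RAC drawing of $G$. Let $T$ be a type whose vertices have exactly two neighbors in $C$, and let $T'\subseteq T$ consist of all members of $T$ which have no bends in $\delta$. Then $T'$ contains at most four members that are involved in crossings with other members of $T'$ in $\delta$.
   Context: All graphs are simple and undirected. A drawing of a graph $G=(V,E)$ maps vertices injectively to points of $\mathbb{R}^2$ and each edge $uv$ to a simple curve joining the images of $u$ and $v$, such that no vertex image lies in the relative interior of the image of an edge not incident to it. A polyline drawing is a drawing in which each edge is drawn as a union of closed straight-line segments $\lambda_1,\dots,\lambda_t$, where consecutive segments share exactly one endpoint and form an angle different from $180^\circ$, and non-consecutive segments are disjoint; the shared points are the bends of the edge. A crossing of two edges is a common point of the relative interiors of their drawings; drawings have finitely many crossings. Two edges have a right-angle crossing if the crossing lies in the relative interiors of the respective segments and these segments are orthogonal. Given $b\in\mathbb{N}$ and $\beta:E\to\{0,1,2,3\}$, a $b$-bend $\beta$-restricted RAC drawing of $G$ is a polyline drawing in which every crossing is a right-angle crossing, the total number of bends is at most $b$, and each edge $e$ has at most $\beta(e)$ bends. Types: $V(G)\setminus C$ is partitioned so that two vertices have the same type iff they have the same set of neighbors in $C$. A member of a type is a vertex of the type together with its incident edges; a member has no bends if none of its incident edges has a bend, and a member is involved in a crossing if one of its incident edges is. *)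

(* Defs.v *)
From mathcomp Require Import all_boot all_order all_algebra.
From mathcomp Require Import reals.
Set Implicit Arguments. Unset Strict Implicit. Unset Printing Implicit Defensive.
Import Order.TTheory GRing.Theory Num.Theory.
Local Open Scope ring_scope.

Section Geometry.
Variable R : realType.

Definition point := (R * R)%type.

Definition lerp (a b : point) (t : R) : point :=
  (a.1 + t * (b.1 - a.1), a.2 + t * (b.2 - a.2)).

Definition on_seg (a b p : point) : Prop :=
  exists t : R, 0 <= t <= 1 /\ p = lerp a b t.

Definition on_oseg (a b p : point) : Prop :=
  exists t : R, 0 < t < 1 /\ p = lerp a b t.

Definition orth (a b c d : point) : Prop :=
  (b.1 - a.1) * (d.1 - c.1) + (b.2 - a.2) * (d.2 - c.2) = 0.

(** A polyline given by its sequence of points q_0,...,q_n (n = number of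
    segments, segment i is [q_i, q_{i+1}]); inner points are the bends. *)
Definition pnth (pts : seq point) (i : nat) : point := nth (0, 0) pts i.
Definition nseg (pts : seq point) : nat := (size pts).-1.

Definition polyline (pts : seq point) : Prop :=
  [/\ (1 < size pts)%N,
      forall i, (i < nseg pts)%N -> pnth pts i <> pnth pts i.+1,
      (* consecutive segments share exactly one endpoint, angle <> 180 deg *)
      forall i, (i.+1 < nseg pts)%N ->
        (forall p, (on_seg (pnth pts i) (pnth pts i.+1) p /\
                    on_seg (pnth pts i.+1) (pnth pts i.+2) p) <-> p = pnth pts i.+1)
        /\ ~ on_oseg (pnth pts i) (pnth pts i.+2) (pnth pts i.+1)
    &
      forall i j, (i.+1 < j)%N -> (j < nseg pts)%N -> forall p,
        ~ (on_seg (pnth pts i) (pnth pts i.+1) p /\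
           on_seg (pnth pts j) (pnth pts j.+1) p)].

Definition on_curve (pts : seq point) (p : point) : Prop :=
  exists2 i, (i < nseg pts)%N & on_seg (pnth pts i) (pnth pts i.+1) p.

Definition in_relint (pts : seq point) (p : point) : Prop :=
  [/\ on_curve pts p, p <> pnth pts 0 & p <> pnth pts (nseg pts)].

End Geometry.

Section Drawings.
Variable R : realType.
Variable V : finType.
Variable adj : rel V.

Definition simple_graph : Prop := symmetric adj /\ irreflexive adj.

Definition edge_path (pos : V -> point R) (bends : V -> V -> seq (point R))
  (u v : V) : seq (point R) := pos u :: bends u v ++ [:: pos v].

Definition polyline_drawing (pos : V -> point R)
  (bends : V -> V -> seq (point R)) : Prop :=
  [/\ injective pos,
      forall u v, adj u v -> bends v u = rev (bends u v),
      forall u v, adj u v -> polyline (edge_path pos bends u v)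
    & forall u v w, adj u v -> w != u -> w != v ->
        ~ in_relint (edge_path pos bends u v) (pos w)].

Definition same_edge (u1 v1 u2 v2 : V) : bool :=
  ((u1 == u2) && (v1 == v2)) || ((u1 == v2) && (v1 == u2)).

Definition crossing_at pos bends (u1 v1 u2 v2 : V) (p : point R) : Prop :=
  [/\ adj u1 v1, adj u2 v2, ~~ same_edge u1 v1 u2 v2,
      in_relint (edge_path pos bends u1 v1) p
    & in_relint (edge_path pos bends u2 v2) p].

Definition right_angle_at pos bends (u1 v1 u2 v2 : V) (p : point R) : Prop :=
  let P1 := edge_path pos bends u1 v1 in
  let P2 := edge_path pos bends u2 v2 in
  exists i j, [/\ (i < nseg P1)%N, (j < nseg P2)%N,
    on_oseg (pnth P1 i) (pnth P1 i.+1) p,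
    on_oseg (pnth P2 j) (pnth P2 j.+1) p
  & orth (pnth P1 i) (pnth P1 i.+1) (pnth P2 j) (pnth P2 j.+1)].

(** total number of bends, each edge counted once *)
Definition total_bends (bends : V -> V -> seq (point R)) : nat :=
  \sum_(u : V) \sum_(v : V | (enum_rank u < enum_rank v)%N && adj u v)
     size (bends u v).

Definition RAC_drawing (b : nat) (beta : V -> V -> nat) pos bends : Prop :=
  [/\ polyline_drawing pos bends,
      forall u1 v1 u2 v2 p, crossing_at pos bends u1 v1 u2 v2 p ->
        right_angle_at pos bends u1 v1 u2 v2 p,
      (total_bends bends <= b)%N
    & forall u v, adj u v -> (size (bends u v) <= beta u v)%N].

Definition vertex_cover (C : {set V}) : Prop :=
  forall u v, adj u v -> u \in C \/ v \in C.

Definition nbhd (v : V) : {set V} := [set x | adj v x].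

Definition type_of (C S : {set V}) : {set V} :=
  [set v | (v \notin C) && (nbhd v :&: C == S)].

Definition no_bends (bends : V -> V -> seq (point R)) (v : V) : bool :=
  [forall x, adj v x ==> (bends v x == [::])].

Definition crosses_other_member pos bends (X : {set V}) (v : V) : Prop :=
  exists w x y p, [/\ w \in X, w != v, adj v x, adj w y &
                     crossing_at pos bends v x w y p].

End Drawings.

(* Main.v *)
Require Import Defs.
From mathcomp Require Import all_boot all_order all_algebra.
From mathcomp Require Import reals.
From mathcomp Require Import ring lra.
Set Implicit Arguments. Unset Strict Implicit. Unset Printing Implicit Defensive.
Import Order.TTheory GRing.Theory Num.Theory.
Local Open Scope ring_scope.



Definition Xc (R : realType) (a b z : point R) : R :=
  (z.1-a.1)*(b.1-a.1) + (z.2-a.2)*(b.2-a.2).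
Definition Yc (R : realType) (a b z : point R) : R :=
  (b.1-a.1)*(z.2-a.2) - (b.2-a.2)*(z.1-a.1).
Definition Lc (R : realType) (a b : point R) : R := (b.1-a.1)^+2 + (b.2-a.2)^+2.

Lemma Xlerp (R : realType) (a b p q : point R) t :
  Xc a b (lerp p q t) = Xc a b p + t * (Xc a b q - Xc a b p).
Proof. rewrite /Xc /lerp /=; ring. Qed.
Lemma Ylerp (R : realType) (a b p q : point R) t :
  Yc a b (lerp p q t) = Yc a b p + t * (Yc a b q - Yc a b p).
Proof. rewrite /Yc /lerp /=; ring. Qed.
Lemma Xa (R : realType) (a b : point R) : Xc a b a = 0.
Proof. rewrite /Xc; ring. Qed.
Lemma Ya (R : realType) (a b : point R) : Yc a b a = 0.
Proof. rewrite /Yc; ring. Qed.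
Lemma Xb (R : realType) (a b : point R) : Xc a b b = Lc a b.
Proof. rewrite /Xc /Lc; ring. Qed.
Lemma Yb (R : realType) (a b : point R) : Yc a b b = 0.
Proof. rewrite /Yc; ring. Qed.
Lemma Xswap (R : realType) (a b z : point R) : Xc b a z = Lc a b - Xc a b z.
Proof. rewrite /Xc /Lc; ring. Qed.
Lemma Yswap (R : realType) (a b z : point R) : Yc b a z = - Yc a b z.
Proof. rewrite /Yc; ring. Qed.
Lemma Lswap (R : realType) (a b : point R) : Lc b a = Lc a b.
Proof. rewrite /Lc; ring. Qed.

Lemma orthE (R : realType) (a b p q r s : point R) :
  Lc a b * ((q.1 - p.1) * (s.1 - r.1) + (q.2 - p.2) * (s.2 - r.2)) =
  (Xc a b q - Xc a b p) * (Xc a b s - Xc a b r) +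
  (Yc a b q - Yc a b p) * (Yc a b s - Yc a b r).
Proof. rewrite /Xc /Yc /Lc; ring. Qed.

Lemma Lpos (R : realType) (a b : point R) : a <> b -> 0 < Lc a b.
Proof.
move=> ab; rewrite /Lc.
have sq : forall x : R, x != 0 -> 0 < x ^+ 2.
  move=> x; rewrite neq_lt => /orP[] h; rewrite expr2; nra.
have [h1|h1] := eqVneq (b.1 - a.1) 0.
  have [h2|h2] := eqVneq (b.2 - a.2) 0.
    exfalso; apply: ab; case: a b h1 h2 => [a1 a2] [b1 b2] /= h1 h2.
    by move/eqP: h1; rewrite subr_eq0 => /eqP->; move/eqP: h2; rewrite subr_eq0 => /eqP->.
  by rewrite h1 expr0n /= add0r sq.
by apply: ltr_pwDl; [exact: sq | exact: sqr_ge0].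
Qed.

Lemma ptE (R : realType) (a b z w : point R) : a <> b ->
  Xc a b z = Xc a b w -> Yc a b z = Yc a b w -> z = w.
Proof.
move=> ab hx hy; have L0 := Lpos ab.
have e1 : Lc a b * (z.1 - w.1) = 0.
  have -> : Lc a b * (z.1 - w.1) = (b.1-a.1) * (Xc a b z - Xc a b w) - (b.2-a.2)*(Yc a b z - Yc a b w)
    by rewrite /Xc /Yc /Lc; ring.
  by rewrite hx hy !subrr; ring.
have e2 : Lc a b * (z.2 - w.2) = 0.
  have -> : Lc a b * (z.2 - w.2) = (b.2-a.2) * (Xc a b z - Xc a b w) + (b.1-a.1)*(Yc a b z - Yc a b w)
    by rewrite /Xc /Yc /Lc; ring.
  by rewrite hx hy !subrr; ring.
move/eqP: e1; rewrite mulf_eq0 gt_eqF //= subr_eq0 => /eqP e1.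
move/eqP: e2; rewrite mulf_eq0 gt_eqF //= subr_eq0 => /eqP e2.
by case: z w e1 e2 {hx hy} => [z1 z2] [w1 w2] /= -> ->.
Qed.



Lemma divlt (R : realType) (x1 y1 x2 y2 : R) : 0 < y1 -> 0 < y2 ->
  x1 * y2 < x2 * y1 -> x1 / y1 < x2 / y2.
Proof.
move=> h1 h2 h; rewrite -subr_gt0.
have -> : x2 / y2 - x1 / y1 = (x2 * y1 - x1 * y2) / (y1 * y2).
  by field; rewrite ?(gt_eqF h1) ?(gt_eqF h2).
by apply: divr_gt0; [rewrite subr_gt0 | apply: mulr_gt0].
Qed.

Lemma ltdiv (R : realType) (x1 y1 x2 y2 : R) : 0 < y1 -> 0 < y2 ->
  x1 / y1 < x2 / y2 -> x1 * y2 < x2 * y1.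
Proof.
move=> h1 h2 h; rewrite -subr_gt0.
have -> : x2 * y1 - x1 * y2 = (x2 / y2 - x1 / y1) * (y1 * y2).
  by field; rewrite ?(gt_eqF h1) ?(gt_eqF h2).
by apply: mulr_gt0; [rewrite subr_gt0 | apply: mulr_gt0].
Qed.

Lemma core1 (R : realType) (L xP yP xQ yQ s t : R) : 0 < L -> 0 < s < 1 -> 0 < t < 1 ->
  (1-s)*xP = xQ + t*(L-xQ) -> (1-s)*yP = (1-t)*yQ -> 0 < yP ->
  [/\ 0 < yQ, xQ*yP < xP*yQ & (L-xP)*yQ < (L-xQ)*yP].
Proof.
move=> L0 /andP[s0 s1] /andP[t0 t1] hx hy yP0.
have yQ0 : 0 < yQ by nra.
split => //.
  have : 0 < (1-s) * (xP*yQ - xQ*yP).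
    have -> : (1-s) * (xP*yQ - xQ*yP) = ((1-s)*xP)*yQ - xQ*((1-s)*yP) by ring.
    rewrite hx hy (_ : _ - _ = t*L*yQ); last by ring.
    by rewrite !mulr_gt0.
  by rewrite pmulr_rgt0 ?subr_gt0.
have : (1-s) * ((L-xP)*yQ - (L-xQ)*yP) < 0.
  have -> : (1-s) * ((L-xP)*yQ - (L-xQ)*yP) = (1-s)*L*yQ - ((1-s)*xP)*yQ - (L-xQ)*((1-s)*yP) by ring.
  rewrite hx hy (_ : _ - _ = - (s*L*yQ)); last by ring.
  by rewrite oppr_lt0 !mulr_gt0.
by rewrite pmulr_rlt0 ?subr_gt0 // subr_lt0.
Qed.

Lemma core0 (R : realType) (e1 e2 f1 f2 s t : R) : s < 1 ->
  (1-s)*e1 = (1-t)*f1 -> (1-s)*e2 = (1-t)*f2 -> e1*f1+e2*f2 = 0 -> e1 = 0 /\ e2 = 0.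
Proof.
move=> s1 h1 h2 h.
have : (1-s)*(e1*e1+e2*e2) = 0.
  have -> : (1-s)*(e1*e1+e2*e2) = ((1-s)*e1)*e1+((1-s)*e2)*e2 by ring.
  rewrite h1 h2; have -> : (1 - t) * f1 * e1 + (1 - t) * f2 * e2 = (1-t)*(e1*f1+e2*f2) by ring.
  by rewrite h mulr0.
move/eqP; rewrite mulf_eq0 subr_eq0 => /orP[/eqP|/eqP] h3; first by move: s1; rewrite -h3 ltxx.
split; nra.
Qed.



Lemma pair_eq (R : realType) (P Q : point R) : P.1 = Q.1 -> P.2 = Q.2 -> P = Q.
Proof. by case: P Q => [? ?] [? ?] /= -> ->. Qed.

Lemma lerp_eqL (R : realType) (P Q : point R) s : lerp P Q s = P -> 0 < s -> P = Q.
Proof.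
move=> h s0; have h1 := f_equal fst h; have h2 := f_equal snd h; move: h1 h2; rewrite /lerp /=.
move=> h1 h2; apply: pair_eq.
  have : s * (Q.1 - P.1) = 0.
  have e : s * (Q.1 - P.1) = (P.1 + s * (Q.1 - P.1)) - P.1 by ring.
  by rewrite e h1 subrr.
  by move/eqP; rewrite mulf_eq0 gt_eqF //= subr_eq0 => /eqP.
have : s * (Q.2 - P.2) = 0.
  have e : s * (Q.2 - P.2) = (P.2 + s * (Q.2 - P.2)) - P.2 by ring.
  by rewrite e h2 subrr.
by move/eqP; rewrite mulf_eq0 gt_eqF //= subr_eq0 => /eqP.
Qed.

Lemma lerp_eqR (R : realType) (P Q : point R) s : lerp P Q s = Q -> s < 1 -> P = Q.
Proof.
move=> h s1; have h1 := f_equal fst h; have h2 := f_equal snd h; move: h1 h2; rewrite /lerp /=.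
move=> h1 h2; apply: pair_eq.
  have : (1 - s) * (Q.1 - P.1) = 0.
  have e : (1 - s) * (Q.1 - P.1) = Q.1 - (P.1 + s * (Q.1 - P.1)) by ring.
  by rewrite e h1 subrr.
  by move/eqP; rewrite mulf_eq0 subr_eq0 (gt_eqF s1) /= subr_eq0 => /eqP.
have : (1 - s) * (Q.2 - P.2) = 0.
  have e : (1 - s) * (Q.2 - P.2) = Q.2 - (P.2 + s * (Q.2 - P.2)) by ring.
  by rewrite e h2 subrr.
by move/eqP; rewrite mulf_eq0 subr_eq0 (gt_eqF s1) /= subr_eq0 => /eqP.
Qed.

Lemma G0 (R : realType) (P Q c p : point R) s t : 0 < s < 1 -> p = lerp P c s ->
  p = lerp Q c t -> orth P c Q c -> P = c.
Proof.
move=> /andP[s0 s1] hp hq; rewrite /orth.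
have h1 := f_equal fst hp; have h2 := f_equal snd hp.
have k1 := f_equal fst hq; have k2 := f_equal snd hq.
move: h1 h2 k1 k2; rewrite /lerp /= => h1 h2 k1 k2 ho.
have [] := @core0 R (P.1 - c.1) (P.2 - c.2) (Q.1 - c.1) (Q.2 - c.2) s t s1.
- have -> : (1 - s) * (P.1 - c.1) = p.1 - c.1 by rewrite h1; ring.
  by rewrite k1; ring.
- have -> : (1 - s) * (P.2 - c.2) = p.2 - c.2 by rewrite h2; ring.
  by rewrite k2; ring.
- by rewrite -ho; ring.
move=> /eqP e1 /eqP e2; move: e1 e2; rewrite !subr_eq0 => /eqP e1 /eqP e2.
exact: pair_eq.
Qed.

Lemma G1 (R : realType) (a b P Q p : point R) s t : a <> b -> P <> a -> Q <> b ->
  0 < s < 1 -> p = lerp P a s -> 0 < t < 1 -> p = lerp Q b t -> orth P a Q b ->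
  exists sg : R, (sg = 1 \/ sg = -1) /\
   [/\ 0 < sg * Yc a b P, 0 < sg * Yc a b Q,
       Xc a b Q / (sg * Yc a b Q) < Xc a b P / (sg * Yc a b P) &
       (Lc a b - Xc a b P) / (sg * Yc a b P) < (Lc a b - Xc a b Q) / (sg * Yc a b Q)].
Proof.
move=> ab Pa Qb hs hp ht hq ho.
have L0 := Lpos ab.
have hx : (1 - s) * Xc a b P = Xc a b Q + t * (Lc a b - Xc a b Q).
  have := f_equal (Xc a b) hp; rewrite hq !Xlerp Xa Xb => ->; ring.
have hy : (1 - s) * Yc a b P = (1 - t) * Yc a b Q.
  have := f_equal (Yc a b) hp; rewrite hq !Ylerp Ya Yb => e.
  have -> : (1 - t) * Yc a b Q = Yc a b Q + t * (0 - Yc a b Q) by ring.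
  by rewrite e; ring.
have hpr : Xc a b P * (Lc a b - Xc a b Q) = Yc a b P * Yc a b Q.
  have := orthE a b P a Q b; rewrite /orth in ho; rewrite ho mulr0 Xa Ya Xb Yb => e.
  have e2 : Xc a b P * (Lc a b - Xc a b Q) - Yc a b P * Yc a b Q =
    - ((0 - Xc a b P) * (Lc a b - Xc a b Q) + (0 - Yc a b P) * (0 - Yc a b Q)) by ring.
  by apply/eqP; rewrite -subr_eq0 e2 -e oppr0.
have yP0 : Yc a b P != 0.
  apply/eqP => y0.
  move: hy; rewrite y0 mulr0 => /esym/eqP; rewrite mulf_eq0 subr_eq0.
  case/andP: ht => t0 t1; rewrite (gt_eqF t1) /= => /eqP yQ0.
  move: hpr; rewrite y0 mul0r => /eqP; rewrite mulf_eq0 => /orP[] /eqP h.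
    by apply: Pa; apply: (ptE ab); rewrite ?Xa ?Ya.
  by apply: Qb; apply: (ptE ab); rewrite ?Xb ?Yb //; apply/eqP; rewrite eq_sym -subr_eq0 h.
pose sg : R := if 0 < Yc a b P then 1 else -1.
have sg2 : sg * sg = 1 by rewrite /sg; case: ifP => _; ring.
have sgP : 0 < sg * Yc a b P.
  rewrite /sg; case: ifP => h; first by rewrite mul1r.
  by rewrite mulN1r oppr_gt0 lt_neqAle yP0 /= leNgt h.
have hy' : (1 - s) * (sg * Yc a b P) = (1 - t) * (sg * Yc a b Q) by rewrite mulrCA hy mulrCA.
have [yQ0 i1 i2] := @core1 R (Lc a b) (Xc a b P) (sg * Yc a b P) (Xc a b Q) (sg * Yc a b Q) s t
  L0 hs ht hx hy' sgP.
exists sg; split; first by rewrite /sg; case: ifP => _; [left|right].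
split => //; apply: divlt => //.
Qed.

Lemma frac01 (R : realType) (x E : R) : 0 < x -> x < E -> 0 < 1 - x / E < 1.
Proof.
move=> x0 xE; have E0 : 0 < E by apply: lt_trans xE.
apply/andP; split.
  by rewrite subr_gt0 ltr_pdivrMr // mul1r.
by rewrite ltrBlDr ltrDl divr_gt0.
Qed.

Lemma G2 (R : realType) (a b U W : point R) (sg : R) : a <> b -> sg * sg = 1 ->
  0 < sg * Yc a b U -> 0 < sg * Yc a b W ->
  Xc a b W / (sg * Yc a b W) < Xc a b U / (sg * Yc a b U) ->
  (Lc a b - Xc a b U) / (sg * Yc a b U) < (Lc a b - Xc a b W) / (sg * Yc a b W) ->
  exists s t, [/\ 0 < s < 1, 0 < t < 1 & lerp U a s = lerp W b t].
Proof.
move=> ab sg2 yu0 yw0 h1 h2; have L0 := Lpos ab.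
have D1 := ltdiv yw0 yu0 h1.
have D2 := ltdiv yu0 yw0 h2.
set xu := Xc a b U in D1 D2 *; set xw := Xc a b W in D1 D2 *.
set yu := sg * Yc a b U in D1 D2 yu0 *; set yw := sg * Yc a b W in D1 D2 yw0 *.
set L := Lc a b in L0 D1 D2 *.
have Lyu := mulr_gt0 L0 yu0; have Lyw := mulr_gt0 L0 yw0.
set E := xu * yw - xw * yu + L * yu.
have E0 : 0 < E by rewrite /E; lra.
exists (1 - L * yw / E), (1 - L * yu / E); split.
- apply: frac01; first by apply: mulr_gt0.
  rewrite /E; lra.
- apply: frac01; first by apply: mulr_gt0.
  rewrite /E; lra.
have En : E != 0 by rewrite gt_eqF.
apply: (ptE ab).
  rewrite !Xlerp Xa Xb -/xu -/xw -/L; rewrite /E in En *.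
  field; exact: En.
rewrite !Ylerp Ya Yb; rewrite /E /yu /yw in En *.
field; exact: En.
Qed.

Lemma G2b (R : realType) (a b U W : point R) (sg : R) : sg * sg = 1 ->
  0 < sg * Yc a b U -> 0 < sg * Yc a b W -> orth U a W b ->
  Xc a b U / (sg * Yc a b U) * ((Lc a b - Xc a b W) / (sg * Yc a b W)) = 1.
Proof.
move=> sg2 yu0 yw0 ho.
have hpr : Xc a b U * (Lc a b - Xc a b W) = Yc a b U * Yc a b W.
  have := orthE a b U a W b; rewrite /orth in ho; rewrite ho mulr0 Xa Ya Xb Yb => e.
  have e2 : Xc a b U * (Lc a b - Xc a b W) - Yc a b U * Yc a b W =
    - ((0 - Xc a b U) * (Lc a b - Xc a b W) + (0 - Yc a b U) * (0 - Yc a b W)) by ring.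
  by apply/eqP; rewrite -subr_eq0 e2 -e oppr0.
rewrite mulf_div hpr.
have eP : sg * Yc a b U * (sg * Yc a b W) = Yc a b U * Yc a b W.
  by rewrite -[RHS]mul1r -sg2; ring.
have P0 : sg * Yc a b U * (sg * Yc a b W) != 0 by rewrite mulf_neq0 ?gt_eqF.
by rewrite -eP divff.
Qed.

Lemma G3a (R : realType) (a b U W : point R) (sg : R) : a <> b -> sg * sg = 1 ->
  0 < sg * Yc a b U -> 0 < sg * Yc a b W -> sg * Yc a b W < sg * Yc a b U ->
  Xc a b U * (sg * Yc a b W) = Xc a b W * (sg * Yc a b U) ->
  exists s, 0 < s < 1 /\ W = lerp U a s.
Proof.
move=> ab sg2 yu0 yw0 lt e.
exists (1 - (sg * Yc a b W) / (sg * Yc a b U)); split.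
  apply: frac01 => //.
have yn : sg * Yc a b U != 0 by rewrite gt_eqF.
have sn : sg != 0 by apply/eqP => s0; move: sg2; rewrite s0 mul0r => /eqP; rewrite eq_sym oner_eq0.
have yU : Yc a b U != 0 by apply: contra yn => /eqP ->; rewrite mulr0.
apply: (ptE ab).
  rewrite Xlerp Xa.
  apply: (mulIf yn); rewrite -e; field; by rewrite yU sn.
rewrite Ylerp Ya; field; by rewrite yU sn.
Qed.

Lemma G3 (R : realType) (a b U W : point R) (sg : R) : a <> b -> sg * sg = 1 ->
  0 < sg * Yc a b U -> 0 < sg * Yc a b W ->
  Xc a b U / (sg * Yc a b U) = Xc a b W / (sg * Yc a b W) -> U <> W ->
  (exists s, 0 < s < 1 /\ W = lerp U a s) \/ (exists s, 0 < s < 1 /\ U = lerp W a s).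
Proof.
move=> ab sg2 yu0 yw0 e UW.
have e' : Xc a b U * (sg * Yc a b W) = Xc a b W * (sg * Yc a b U).
  by apply/eqP; rewrite -(@eqr_div _ _ _ _ _ (lt0r_neq0 yu0) (lt0r_neq0 yw0)) e.
have [lt|gt|eq] := ltgtP (sg * Yc a b W) (sg * Yc a b U).
- by left; apply: (G3a ab sg2 yu0 yw0 lt e').
- by right; apply: (G3a ab sg2 yw0 yu0 gt); rewrite e'.
exfalso; apply: UW; apply: (ptE ab).
  by move: e'; rewrite eq => /(mulIf (lt0r_neq0 yu0)).
have sn : sg != 0 by apply/eqP => s0; move: sg2; rewrite s0 mul0r => /eqP; rewrite eq_sym oner_eq0.
by move: eq => /(mulfI sn).
Qed.

Lemma posAB (R : realType) (A B' B : R) : 0 < A + B -> B < B' -> A * B' = 1 -> 0 < A /\ 0 < B'.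
Proof.
move=> h1 h2 h3.
have [A0|A0] := ltP 0 A.
  by split => //; rewrite -(pmulr_rgt0 _ A0) h3.
exfalso.
have [B0|B0] := ltP 0 B'; last by lra.
have : A * B' <= 0 by nra.
by rewrite h3 ler10.
Qed.

Lemma pure1 (R : realType) (Au Bu Ax Bx Ay By Az Bz : R) :
  0 < Au + Bu -> 0 < Ay + By ->
  Bu < Bx -> Au * Bx = 1 -> By < Bz -> Ay * Bz = 1 ->
  (Az < Au -> Bu < Bz -> Au * Bz = 1) -> Az < Ay -> Ay < Au -> False.
Proof.
move=> hu hy b1 p1 b2 p2 H az lt.
have [Au0 Bx0] := posAB hu b1 p1.
have [Ay0 Bz0] := posAB hy b2 p2.
have [l|l] := ltP Bu Bz.
  have := H (lt_trans az lt) l; rewrite -p2 => /(mulIf (lt0r_neq0 Bz0)) e.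
  by move: lt; rewrite e ltxx.
have : Ay * Bz < Au * Bx.
  apply: (@lt_le_trans _ _ (Au * Bz)); first by rewrite ltr_pM2r.
  by rewrite ler_pM2l // ltW // (le_lt_trans l b1).
by rewrite p1 p2 ltxx.
Qed.
Arguments pure1 {R Au Bu Ax Bx Ay By Az Bz}.



Definition Yv (R : realType) (V : Type) (pos : V -> point R) (pa pb : point R) (sg : R) (v : V) :=
  sg * Yc pa pb (pos v).
Definition Av (R : realType) (V : Type) (pos : V -> point R) (pa pb : point R) (sg : R) (v : V) :=
  Xc pa pb (pos v) / (sg * Yc pa pb (pos v)).
Definition Bv (R : realType) (V : Type) (pos : V -> point R) (pa pb : point R) (sg : R) (v : V) :=
  (Lc pa pb - Xc pa pb (pos v)) / (sg * Yc pa pb (pos v)).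
Definition anti (R : realType) (V : finType) (T : {set V}) (pos : V -> point R) (pa pb : point R)
  (sg : R) (u x : V) : Prop :=
  [/\ u \in T, x \in T, 0 < Yv pos pa pb sg u, 0 < Yv pos pa pb sg x &
      Av pos pa pb sg x < Av pos pa pb sg u /\ Bv pos pa pb sg u < Bv pos pa pb sg x].

Lemma ABpos (R : realType) (V : Type) (pos : V -> point R) pa pb sg v :
  pa <> pb -> 0 < Yv pos pa pb sg v -> 0 < Av pos pa pb sg v + Bv pos pa pb sg v.
Proof.
move=> ab h; rewrite /Av /Bv -mulrDl addrC subrK divr_gt0 //; exact: Lpos.
Qed.

Lemma side_uniq (R : realType) (sg sg' y : R) : (sg = 1 \/ sg = -1) -> (sg' = 1 \/ sg' = -1) ->
  0 < sg * y -> 0 < sg' * y -> sg = sg'.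
Proof. by case=> ->; case=> -> //; rewrite ?mul1r ?mulN1r => h1 h2; exfalso; lra. Qed.

Lemma in_relint2 (R : realType) (P Q p : point R) s : 0 < s < 1 -> p = lerp P Q s -> P <> Q ->
  in_relint [:: P; Q] p.
Proof.
move=> /andP[s0 s1] e PQ; split.
- exists 0%N => //; exists s; split => //; apply/andP; split; exact: ltW.
- by move=> h; apply: PQ; apply: (lerp_eqL (s := s)) => //; rewrite -e h.
- by move=> h; apply: PQ; apply: (lerp_eqR (s := s)) => //; rewrite -e h.
Qed.

Lemma rac2 (R : realType) (A B C D p : point R) :
  (exists i j, [/\ (i < nseg [:: A; B])%N, (j < nseg [:: C; D])%N,
    on_oseg (pnth [:: A; B] i) (pnth [:: A; B] i.+1) p,
    on_oseg (pnth [:: C; D] j) (pnth [:: C; D] j.+1) p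
  & orth (pnth [:: A; B] i) (pnth [:: A; B] i.+1) (pnth [:: C; D] j) (pnth [:: C; D] j.+1)]) ->
  [/\ on_oseg A B p, on_oseg C D p & orth A B C D].
Proof. by case=> [[|i]] [[|j]] []. Qed.
Arguments rac2 {R A B C D p}.

Theorem lemma10 (R : realType) (V : finType) (adj : rel V) (b : nat)
  (beta : V -> V -> nat) (C S : {set V})
  (pos : V -> point R) (bends : V -> V -> seq (point R)) :
  simple_graph adj ->
  (forall u v, adj u v -> beta u v = beta v u /\ (beta u v <= 3)%N) ->
  vertex_cover adj C ->
  RAC_drawing adj b beta pos bends ->
  S \subset C -> #|S| = 2 ->
  let T' := [set v in type_of adj C S | no_bends adj bends v] in
  forall X : {set V}, X \subset T' ->
    (forall v, v \in X -> crosses_other_member adj pos bends T' v) ->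
    (#|X| <= 4)%N.
Proof.
move=> [adjsym adjirr] _ VC [[inj bsym poly novert] RAC _ _] SC S2 T' X XT inv.
have /cards2P [c1 [c2 [c12 SE]]] : #|S| == 2%N by rewrite S2.
have c1C : c1 \in C by apply: (subsetP SC); rewrite SE !inE eqxx.
have c2C : c2 \in C by apply: (subsetP SC); rewrite SE !inE eqxx orbT.
set pa := pos c1; set pb := pos c2.
have ab : pa <> pb by move/inj => e; move: c12; rewrite e eqxx.
have memT : forall v, v \in T' -> [/\ v \notin C, nbhd adj v :&: C = S & no_bends adj bends v].
  by move=> v; rewrite !inE => /andP[/andP[-> /eqP ->] ->].
have F1 : forall v x, v \in T' -> adj v x -> x = c1 \/ x = c2.
  move=> v x /memT[vC NS _] vx.
  have : x \in nbhd adj v :&: C.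
    rewrite !inE vx /=; case: (VC v x vx) => // vC'; by move: vC; rewrite vC'.
  by rewrite NS SE !inE => /orP[/eqP|/eqP]; [left|right].
have F2 : forall v, v \in T' -> adj v c1 /\ adj v c2.
  move=> v /memT[_ NS _].
  have : c1 \in nbhd adj v :&: C by rewrite NS SE !inE eqxx.
  have : c2 \in nbhd adj v :&: C by rewrite NS SE !inE eqxx orbT.
  by rewrite !inE => /andP[h2 _] /andP[h1 _].
have F3 : forall v x, v \in T' -> adj v x -> edge_path pos bends v x = [:: pos v; pos x].
  move=> v x /memT[_ _ /forallP nb] vx.
  by move: (nb x); rewrite vx /= => /eqP e; rewrite /edge_path e.
have F4 : forall v c, v \in T' -> c \in C -> pos v <> pos c.
  by move=> v c /memT[vC _ _] cC /inj e; move: vC; rewrite e cC.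
have antiE : forall sg u x, sg * sg = 1 -> anti T' pos pa pb sg u x ->
    Av pos pa pb sg u * Bv pos pa pb sg x = 1.
  move=> sg u x sg2 [uT xT yu yx [h1 h2]].
  have [s [t [hs ht e]]] := G2 ab sg2 yu yx h1 h2.
  have [uc1 _] := F2 u uT; have [_ xc2] := F2 x xT.
  have cr : crossing_at adj pos bends u c1 x c2 (lerp (pos u) pa s).
    split => //.
    - rewrite /same_edge (negbTE c12) andbF /=.
      have [uC _ _] := memT u uT; apply/negP => /andP[/eqP ue _]; by move: uC; rewrite ue c2C.
    - by rewrite F3 //; apply: (in_relint2 hs erefl (F4 u c1 uT c1C)).
    - by rewrite F3 // e; apply: (in_relint2 ht erefl (F4 x c2 xT c2C)).
  have := RAC _ _ _ _ _ cr; rewrite /right_angle_at !F3 // => /rac2 [_ _ ho].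
  exact: G2b sg2 yu yx ho.
have invd : forall v, v \in X -> exists sg : R, (sg = 1 \/ sg = -1) /\
    (0 < Yv pos pa pb sg v /\ exists w, anti T' pos pa pb sg v w \/ anti T' pos pa pb sg w v).
  move=> v vX; have vT := subsetP XT v vX.
  have [w [x [y [p [wT wv vx wy cr]]]]] := inv v vX.
  have := RAC _ _ _ _ _ cr; rewrite /right_angle_at !F3 // => /rac2 [[s [hs e1]] [t [ht e2]] ho].
  have [ex|ex] := F1 v x vT vx; have [ey|ey] := F1 w y wT wy; subst x y.
  - by exfalso; apply: (F4 v c1 vT c1C); apply: (G0 hs e1 e2 ho).
  - have [sg [sgE [y1 y2 i1 i2]]] := G1 ab (F4 v c1 vT c1C) (F4 w c2 wT c2C) hs e1 ht e2 ho.
    by exists sg; split => //; split => //; exists w; left; split.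
  - have ho' : orth (pos w) (pos c1) (pos v) (pos c2) by move: ho; rewrite /orth => <-; ring.
    have [sg [sgE [y1 y2 i1 i2]]] := G1 ab (F4 w c1 wT c1C) (F4 v c2 vT c2C) ht e2 hs e1 ho'.
    by exists sg; split => //; split => //; exists w; right; split.
  - by exfalso; apply: (F4 v c2 vT c2C); apply: (G0 hs e1 e2 ho).
have noray : forall c u y s, (c = c1 \/ c = c2) -> u \in T' -> y \in T' -> y != u ->
    0 < s < 1 -> pos y = lerp (pos u) (pos c) s -> False.
  move=> c u y s hc uT yT yu hs e.
  have uc : adj u c by case: hc => ->; case: (F2 u uT).
  have cC : c \in C by case: hc => ->.
  have yc : y != c by apply/eqP => yc; have [yC _ _] := memT y yT; move: yC; rewrite yc cC.
  apply: (novert u c y uc yu yc).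
  by rewrite F3 //; apply: (in_relint2 hs e (F4 u c uT cC)).
have sq1 : forall sg : R, (sg = 1 \/ sg = -1) -> sg * sg = 1.
  by move=> sg [] ->; rewrite ?mulrNN mulr1.
have Ainj : forall sg u y, (sg = 1 \/ sg = -1) -> u \in T' -> y \in T' ->
    0 < Yv pos pa pb sg u -> 0 < Yv pos pa pb sg y ->
    Av pos pa pb sg u = Av pos pa pb sg y -> u = y.
  move=> sg u y sgE uT yT yu yy e; case: (eqVneq u y) => // uy; exfalso.
  have PU : pos u <> pos y by move/inj => e'; move: uy; rewrite e' eqxx.
  case: (G3 ab (sq1 sg sgE) yu yy e PU) => [[s [hs ey]]|[s [hs eu]]].
  - by apply: (noray c1 u y s (or_introl erefl) uT yT _ hs ey); rewrite eq_sym.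
  - exact: (noray c1 y u s (or_introl erefl) yT uT uy hs eu).
have Binj : forall sg u y, (sg = 1 \/ sg = -1) -> u \in T' -> y \in T' ->
    0 < Yv pos pa pb sg u -> 0 < Yv pos pa pb sg y ->
    Bv pos pa pb sg u = Bv pos pa pb sg y -> u = y.
  move=> sg u y sgE uT yT yu yy e; case: (eqVneq u y) => // uy; exfalso.
  have PU : pos u <> pos y by move/inj => e'; move: uy; rewrite e' eqxx.
  have ba : pb <> pa by move=> h; apply: ab.
  have sg2 : (- sg) * (- sg) = 1 by rewrite mulrNN sq1.
  have yu' : 0 < - sg * Yc pb pa (pos u) by rewrite (Yswap pa pb) mulrNN.
  have yy' : 0 < - sg * Yc pb pa (pos y) by rewrite (Yswap pa pb) mulrNN.
  have e' : Xc pb pa (pos u) / (- sg * Yc pb pa (pos u)) = Xc pb pa (pos y) / (- sg * Yc pb pa (pos y)).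
    by rewrite (Xswap pa pb (pos u)) (Xswap pa pb (pos y)) (Yswap pa pb (pos u)) (Yswap pa pb (pos y)) !mulrNN.
  case: (G3 ba sg2 yu' yy' e' PU) => [[s [hs ey]]|[s [hs eu]]].
  - by apply: (noray c2 u y s (or_intror erefl) uT yT _ hs ey); rewrite eq_sym.
  - exact: (noray c2 y u s (or_intror erefl) yT uT uy hs eu).
have upair : forall sg u x y z, (sg = 1 \/ sg = -1) -> anti T' pos pa pb sg u x ->
    anti T' pos pa pb sg y z -> u = y /\ x = z.
  move=> sg u x y z sgE hux hyz.
  have sg2 := sq1 sg sgE.
  have [uT xT yu yx [a1 b1]] := hux.
  have [yT zT yy yz [a2 b2]] := hyz.
  have p1 := antiE sg u x sg2 hux.
  have p2 := antiE sg y z sg2 hyz.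
  have H1 := fun h h' => antiE sg u z sg2 (And5 uT zT yu yz (conj h h')).
  have H2 := fun h h' => antiE sg y x sg2 (And5 yT xT yy yx (conj h h')).
  have hu := ABpos ab yu; have hy := ABpos ab yy.
  have eA : Av pos pa pb sg u = Av pos pa pb sg y.
    case: (ltgtP (Av pos pa pb sg u) (Av pos pa pb sg y)) => // lt; exfalso.
    - exact: (pure1 hy hu b2 p2 b1 p1 H2 a1 lt).
    - exact: (pure1 hu hy b1 p1 b2 p2 H1 a2 lt).
  have eu : u = y := Ainj sg u y sgE uT yT yu yy eA.
  split => //.
  have A0 : Av pos pa pb sg u != 0.
    by apply/eqP => h; move: p1; rewrite h mul0r => /eqP; rewrite eq_sym oner_eq0.
  apply: (Binj sg x z sgE xT zT yx yz).
  by apply: (mulfI A0); rewrite p1 eA p2.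
have card2 : forall sg : R, (sg = 1 \/ sg = -1) ->
    (#|[set v in X | (0 < Yv pos pa pb sg v)%R]| <= 2)%N.
  move=> sg sgE.
  have [u0 [x0 sub]] : exists u0 x0, [set v in X | 0 < Yv pos pa pb sg v] \subset [set u0; x0].
    case: (set_0Vmem [set v in X | 0 < Yv pos pa pb sg v]) => [->|[v0]].
      by exists c1, c1; rewrite sub0set.
    rewrite inE => /andP[v0X yv0].
    have [sg' [sgE' [yv' [w hw]]]] := invd v0 v0X.
    have ess := side_uniq sgE sgE' yv0 yv'; subst sg'.
    have [u0 [x0 h0]] : exists u0 x0, anti T' pos pa pb sg u0 x0.
      by case: hw => h; [exists v0, w | exists w, v0].
    exists u0, x0; apply/subsetP => v; rewrite inE => /andP[vX yv].
    have [sg'' [sgE'' [yv'' [w' hw']]]] := invd v vX.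
    have ess := side_uniq sgE sgE'' yv yv''; subst sg''.
    case: hw' => h.
    - by have [e1 e2] := upair _ _ _ _ _ sgE h h0; rewrite !inE e1 eqxx.
    - by have [e1 e2] := upair _ _ _ _ _ sgE h h0; rewrite !inE e2 eqxx orbT.
  apply: leq_trans (subset_leq_card sub) _; rewrite cards2; by case: (u0 != x0).
have sub : X \subset [set v in X | 0 < Yv pos pa pb 1 v] :|: [set v in X | 0 < Yv pos pa pb (-1) v].
  apply/subsetP => v vX; have [sg [sgE [yv _]]] := invd v vX; rewrite !inE vX /=.
  by case: sgE yv => -> ->; rewrite ?orbT.
apply: leq_trans (subset_leq_card sub) _; rewrite cardsU; apply: leq_trans (leq_subr _ _) _.
exact: (leq_add (card2 1 (or_introl erefl)) (card2 (-1) (or_intror erefl))).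
Qed.
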